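(* Let $(\mathcal A,r)$ be a potential population game with potential $\Phi$, $\mathcal G=(\mathcal H,\boldsymbol\eta,W)$ an undirected connected community network, and $\mathbf f$ an imitation mechanism satisfying Assumption 1. For $\mathbf x\in\mathcal X$ with $\mathbf y=\mathbf x\mathbf 1$, define $\dot y_i=\sum_{h\in\mathcal H}\dot x_{ih}$ using the right-hand side of the network imitation dynamics at $\mathbf x$, and $\dot\Phi(\mathbf y)=\sum_{i\in\mathcal A}\frac{\partial\Phi(\mathbf y)}{\partial y_i}\dot y_i$. Then $\dot\Phi(\mathbf y)\ge 0$ for every $\mathbf x\in\mathcal X$, with equality if and only if $\mathbf x\in\mathcal X^\bullet$.
   Context: Let $\mathcal A$ be a finite set of actions, $\mathcal Y=\{\mathbf y\in\mathbb R_+^{\mathcal A}:\mathbf 1^\top\mathbf y=1\}$, reward functions $r_i:\mathcal Y\to\mathbb R$. The game $(\mathcal A,r)$ is potential if there is a differentiable $\Phi:\mathcal Y\to\mathbb R$ (differentiable on a neighborhood of $\mathcal Y$) with $r_j(\mathbf y)-r_i(\mathbf y)=\frac{\partial\Phi}{\partial y_j}(\mathbf y)-\frac{\partial\Phi}{\partial y_i}(\mathbf y)$ for all $i,j\in\mathcal A$, $\mathbf y\in\mathcal Y$. Community network $\mathcal G=(\mathcal H,\boldsymbol\eta,W)$: finite $\mathcal H$, $\eta_h>0$ with $\sum_h\eta_h=1$, nonnegative $W$ with positive diagonal; connected = $W$ irreducible; undirected = $W=W^\top$. $\mathcal X=\{\mathbf x\in\mathbb R_+^{\mathcal A\times\mathcal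 H}:\mathbf 1^\top\mathbf x=\boldsymbol\eta^\top\}$. Imitation mechanism: Lipschitz $\mathbf f:\mathcal Y\to\mathbb R_+^{\mathcal A\times\mathcal A}$. Dynamics: $$\dot x_{ih}=\sum_{j\in\mathcal A}\sum_{k\in\mathcal H}\big(x_{jh}W_{hk}x_{ik}f_{ji}(\mathbf x\mathbf 1)-x_{ih}W_{hk}x_{jk}f_{ij}(\mathbf x\mathbf 1)\big).$$ Assumption 1: $\operatorname{sgn}(f_{ij}(\mathbf y)-f_{ji}(\mathbf y))=\operatorname{sgn}(r_j(\mathbf y)-r_i(\mathbf y))$ for all $i,j,\mathbf y$. $\mathcal Y^\bullet=\{\mathbf y\in\mathcal Y:y_i>0,y_j>0\Rightarrow r_i(\mathbf y)=r_j(\mathbf y)\}$, $\mathcal X^\bullet=\{\mathbf x\in\mathcal X:\mathbf x\mathbf 1\in\mathcal Y^\bullet\}$. *)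

(* Defs.v *)
(* Actions A = 'I_n, communities H = 'I_m (any finite set is in bijection
   with an ordinal). Population states y are row vectors 'rV[R]_n,
   network states x are matrices 'M[R]_(n, m) (rows = actions, columns =
   communities). *)
From HB Require Import structures.
From mathcomp Require Import all_boot all_order all_algebra.
From mathcomp Require Import all_classical all_reals all_analysis.
Set Implicit Arguments. Unset Strict Implicit. Unset Printing Implicit Defensive.
Import Order.TTheory GRing.Theory Num.Theory.
Import numFieldNormedType.Exports.
Local Open Scope classical_set_scope.
Local Open Scope ring_scope.

Section Defs.
Variables (R : realType) (n m : nat).

Definition simplex : set 'rV[R]_n :=
  [set y | (forall i, 0 <= y ord0 i) /\ \sum_i y ord0 i = 1].

Definition unitv (i : 'I_n) : 'rV[R]_n := delta_mx ord0 i.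

Definition pderiv (Phi : 'rV[R]_n -> R) (i : 'I_n) (y : 'rV[R]_n) : R :=
  'D_(unitv i) Phi y.

Definition diff_near_simplex (Phi : 'rV[R]_n -> R) : Prop :=
  exists U : set 'rV[R]_n, open U /\ simplex `<=` U /\
    forall y, U y -> differentiable Phi y.

Definition potential_game (r : 'I_n -> 'rV[R]_n -> R) (Phi : 'rV[R]_n -> R) :=
  diff_near_simplex Phi /\
  forall i j y, simplex y -> r j y - r i y = pderiv Phi j y - pderiv Phi i y.

Definition community_network (eta : 'I_m -> R) (W : 'M[R]_m) : Prop :=
  (forall h, 0 < eta h) /\ \sum_h eta h = 1 /\
  (forall h k, 0 <= W h k) /\ (forall h, 0 < W h h).

Definition irreducible (W : 'M[R]_m) : Prop :=
  forall h k, connect (fun a b => 0 < W a b) h k.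

Definition undirected (W : 'M[R]_m) : Prop := W^T = W.

Definition netstates (eta : 'I_m -> R) : set 'M[R]_(n, m) :=
  [set x | (forall i h, 0 <= x i h) /\ forall h, \sum_i x i h = eta h].

Definition aggr (x : 'M[R]_(n, m)) : 'rV[R]_n := \row_i \sum_h x i h.

Definition imitation_mechanism (f : 'rV[R]_n -> 'M[R]_n) : Prop :=
  (forall y, simplex y -> forall i j, 0 <= f y i j) /\
  exists L : R, forall y y', simplex y -> simplex y' ->
    `|f y - f y'| <= L * `|y - y'|.

Definition assumption1 (r : 'I_n -> 'rV[R]_n -> R) (f : 'rV[R]_n -> 'M[R]_n) :=
  forall i j y, simplex y ->
    Num.sg (f y i j - f y j i) = Num.sg (r j y - r i y).

Definition xdot (W : 'M[R]_m) (f : 'rV[R]_n -> 'M[R]_n)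
  (x : 'M[R]_(n, m)) (i : 'I_n) (h : 'I_m) : R :=
  \sum_j \sum_k (x j h * W h k * x i k * f (aggr x) j i
                 - x i h * W h k * x j k * f (aggr x) i j).

Definition ydot W f x (i : 'I_n) : R := \sum_h xdot W f x i h.

Definition Phidot (Phi : 'rV[R]_n -> R) W f x : R :=
  \sum_i pderiv Phi i (aggr x) * ydot W f x i.

Definition Ybullet (r : 'I_n -> 'rV[R]_n -> R) : set 'rV[R]_n :=
  [set y | simplex y /\
     forall i j, 0 < y ord0 i -> 0 < y ord0 j -> r i y = r j y].

Definition Xbullet r eta : set 'M[R]_(n, m) :=
  [set x | netstates eta x /\ Ybullet r (aggr x)].

End Defs.

(* Main.v *)
Require Import Defs.
From HB Require Import structures.
From mathcomp Require Import all_boot all_order all_algebra.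
From mathcomp Require Import all_classical all_reals all_analysis.
From mathcomp Require Import ring lra.
Import Order.TTheory GRing.Theory Num.Theory.
Local Open Scope classical_set_scope.
Local Open Scope ring_scope.

Lemma sg_prod_ge0 {R : realType} (a b : R) : Num.sg a = Num.sg b -> 0 <= a * b.
Proof.
move=> H.
have -> : a * b = (Num.sg a * `|a|) * (Num.sg b * `|b|) by rewrite -!numEsg.
rewrite H.
have h1 := sqr_ge0 (Num.sg b).
have h2 := mulr_ge0 (normr_ge0 a) (normr_ge0 b).
nra.
Qed.

Lemma sg_prod_eq0 {R : realType} (a b : R) :
  Num.sg a = Num.sg b -> a * b = 0 -> b = 0.
Proof.
move=> H /eqP; rewrite mulf_eq0 => /orP [/eqP ha|/eqP //].
apply/eqP; rewrite -sgr_eq0 -H ha; by rewrite sgr0.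
Qed.

Lemma sum_ge0_term (R : realType) (I : finType) (F : I -> R) (i : I) :
  (forall j, 0 <= F j) -> F i <= \sum_j F j.
Proof.
move=> H; rewrite (bigD1 i) //= lerDl; apply: sumr_ge0 => j _; exact: H.
Qed.

Lemma sum_pos_ex {R : realType} {I : finType} {F : I -> R} :
  0 < \sum_j F j -> exists j, 0 < F j.
Proof.
move=> H; apply/not_existsP => /= Hn.
have : \sum_j F j <= 0.
  apply: sumr_le0 => j _; rewrite leNgt; apply/negP => Hj; exact: (Hn j).
by rewrite leNgt H.
Qed.

Theorem lemma2 (R : realType) (n m : nat)
  (r : 'I_n -> 'rV[R]_n -> R) (Phi : 'rV[R]_n -> R)
  (eta : 'I_m -> R) (W : 'M[R]_m) (f : 'rV[R]_n -> 'M[R]_n) :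
  potential_game r Phi ->
  community_network eta W -> undirected W -> irreducible W ->
  imitation_mechanism f -> assumption1 r f ->
  forall x : 'M[R]_(n, m), netstates eta x ->
    0 <= Phidot Phi W f x /\
    (Phidot Phi W f x = 0 <-> Xbullet r eta x).
Proof.
move=> [_ Hpot] [Heta [Hsum [Wge0 Wdiag]]] Hund Hirr _ Hass x [xge0 xsum].
have Wsym : forall h k, W h k = W k h.
  move=> h k; rewrite /undirected in Hund; have := congr1 (fun M : 'M[R]_m => M k h) Hund; by rewrite mxE.
set y := aggr x.
have yE : forall i, y ord0 i = \sum_h x i h by move=> i; rewrite mxE.
have Hy : simplex y.
  split; first by move=> i; rewrite yE; apply: sumr_ge0 => h _.
  under eq_bigr do rewrite yE.
  rewrite exchange_big /=; under eq_bigr do rewrite xsum; exact: Hsum.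
pose S i j := \sum_h \sum_k x i h * W h k * x j k.
have Sge0 : forall i j, 0 <= S i j.
  move=> i j; apply: sumr_ge0 => h _; apply: sumr_ge0 => k _.
  by rewrite !mulr_ge0.
have Ssym : forall i j, S i j = S j i.
  move=> i j; rewrite /S exchange_big /=; apply: eq_bigr => h _.
  apply: eq_bigr => k _; rewrite (Wsym k h); ring.
pose F i j := f y i j.
pose D i := pderiv Phi i y.
pose G i j := S i j * ((F j i - F i j) * (r i y - r j y)).
have ydotE : forall i, ydot W f x i = \sum_j S i j * (F j i - F i j).
  move=> i; rewrite /ydot /xdot exchange_big /=; apply: eq_bigr => j _.
  under eq_bigr do rewrite sumrB.
  rewrite sumrB mulrBr; congr (_ - _).
    rewrite Ssym /S big_distrl /=; apply: eq_bigr => h _.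
    rewrite big_distrl /=; apply: eq_bigr => k _; by [].
  rewrite /S big_distrl /=; apply: eq_bigr => h _.
  rewrite big_distrl /=; apply: eq_bigr => k _; by [].
have Hsg : forall i j, Num.sg (F j i - F i j) = Num.sg (r i y - r j y).
  by move=> i j; exact: Hass j i y Hy.
have Gge0 : forall i j, 0 <= G i j.
  by move=> i j; rewrite mulr_ge0 // sg_prod_ge0.
pose T i j := D i * (S i j * (F j i - F i j)).
have PE : Phidot Phi W f x = \sum_i \sum_j T i j.
  rewrite /Phidot; apply: eq_bigr => i _; by rewrite ydotE big_distrr.
have HG2 : Phidot Phi W f x + Phidot Phi W f x = \sum_i \sum_j G i j.
  rewrite PE [X in X + _]exchange_big -big_split /=; apply: eq_bigr => i _.
  rewrite -big_split /=; apply: eq_bigr => j _.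
  rewrite /T /G (Ssym j i).
  have e : D i = D j + (r i y - r j y) by rewrite (Hpot j i y Hy); rewrite /D; ring.
  rewrite /D in e; rewrite /D e; ring.
have Gsum0 : 0 <= \sum_i \sum_j G i j.
  by apply: sumr_ge0 => i _; apply: sumr_ge0 => j _.
split; first by lra.
have HG0 : Phidot Phi W f x = 0 <-> forall i j, G i j = 0.
  split.
    move=> H0 i j.
    have Hs : \sum_i \sum_j G i j = 0 by rewrite -HG2 H0 addr0.
    have Hge : forall i : 'I_n, true -> 0 <= \sum_j G i j.
      by move=> i' _; apply: sumr_ge0 => j' _.
    have Hi := @Num.Theory.psumr_eq0P _ _ _ _ Hge Hs i isT.
    exact: (@Num.Theory.psumr_eq0P _ _ _ _ (fun j _ => Gge0 i j) Hi j isT).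
  move=> H0.
  have : \sum_i \sum_j G i j = 0.
    by rewrite big1 // => i _; rewrite big1 // => j _; exact: H0.
  lra.
have Gz : forall i j, G i j = 0 -> S i j = 0 \/ r i y = r j y.
  move=> i j /eqP; rewrite mulf_eq0 => /orP [/eqP ->|/eqP H]; first by left.
  right; have := @sg_prod_eq0 _ _ _ (Hsg i j) H; lra.
have yzero : forall i, y ord0 i = 0 -> forall h, x i h = 0.
  move=> i Hi h; rewrite yE in Hi.
  exact: (@Num.Theory.psumr_eq0P _ _ _ _ (fun h _ => xge0 i h) Hi h isT).
have Spos : forall a b h k, 0 < x a h -> 0 < W h k -> 0 < x b k -> 0 < S a b.
  move=> a b h k H1 H2 H3.
  apply: (lt_le_trans _ (@sum_ge0_term _ _ _ h _)); last first.
    by move=> h'; apply: sumr_ge0 => k' _; rewrite !mulr_ge0.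
  apply: (lt_le_trans _ (@sum_ge0_term _ _ _ k _)); last first.
    by move=> k'; rewrite !mulr_ge0.
  by rewrite !mulr_gt0.
rewrite HG0; split.
- move=> H0; split; first by [].
  split; first exact: Hy.
  have Hcon : forall a b, 0 < S a b -> r a y = r b y.
    move=> a b Hab; case: (Gz a b (H0 a b)) => // HS.
    by move: Hab; rewrite HS ltxx.
  move=> i j Hi Hj.
  rewrite yE in Hi; rewrite yE in Hj.
  have [h0 Hh0] := sum_pos_ex Hi.
  have [k0 Hk0] := sum_pos_ex Hj.
  pose P h := forall a, 0 < x a h -> r a y = r i y.
  have P0 : P h0 by move=> a Ha; apply: Hcon; exact: (Spos a i h0 h0).
  have step : forall h k, P h -> 0 < W h k -> P k.
    move=> h k Ph Hhk b Hb.
    have Hsh : 0 < \sum_a x a h by rewrite xsum.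
    have [a Ha] := sum_pos_ex Hsh.
    rewrite -(Ph a Ha); symmetry; apply: Hcon; exact: (Spos a b h k).
  have Hpath : forall p h, path (fun a b => 0 < W a b) h p -> P h -> P (last h p).
    elim => [//|k p IH] h /= /andP [Hhk Hp] Ph; apply: IH Hp _; exact: step Ph Hhk.
  have := Hirr h0 k0; move/connectP => [p Hp Hl].
  have := Hpath p h0 Hp P0; rewrite -Hl => Pk.
  by rewrite (Pk j Hk0).
- move=> [_ [_ Hb]] i j.
  have ge0 : forall a, 0 <= y ord0 a by move=> a; rewrite yE; apply: sumr_ge0.
  move: (ge0 i); rewrite le0r => /orP [/eqP Hi|Hi].
    by rewrite /G /S big1 ?mul0r // => h _; rewrite big1 // => k _; rewrite (yzero i Hi h) !mul0r.
  move: (ge0 j); rewrite le0r => /orP [/eqP Hj|Hj].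
    by rewrite /G /S big1 ?mul0r // => h _; rewrite big1 // => k _; rewrite (yzero j Hj k) mulr0.
  by rewrite /G (Hb i j Hi Hj) subrr !mulr0.
Qed.
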